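(* Let $S$ be a closed type of system $\mathcal F$ not containing the type constant $O$. Then $S$ is an output type if and only if: for every normal $\lambda$-term $t$ and all types $A_1,\dots,A_r$ that end with $O$, if $x_1:A_1,\dots,x_r:A_r\vdash_{\mathcal F} t : S$, then $x_i\notin Fv(t)$ for all $1\le i\le r$.
   Context: $\lambda$-terms are those of the untyped $\lambda$-calculus; $Fv(t)$ the free variables; normal means without $\beta$-redex. Types of system $\mathcal F$ are built from type variables and type constants (atomic, not quantifiable; $O$ is one) with $\rightarrow$ and $\forall$; only proper types (in every $\forall XA$, $X$ occurs free in $A$). Typing: (ax) $\Gamma \vdash x_i : A_i$ for $x_i:A_i\in\Gamma$; ($\rightarrow_i$) from $\Gamma, x:B \vdash t : C$ infer $\Gamma \vdash \lambda x t : B \rightarrow C$; ($\rightarrow_e$) from $\Gamma \vdash u : B\rightarrow C$, $\Gamma \vdash v : B$ infer $\Gamma \vdash (u)v : C$; ($\forall_i$) from $\Gamma \vdash t : A$, $X$ not free in $\Gamma$, infer $\Gamma \vdash t : \forall X A$; ($\forall_e$) from $\Gamma \vdash t : \forall X A$ infer $\Gamma \vdash t : A[C/X]$. An output type is a closed type $S$ not containing $O$ such that for every normal $t$ and variable $\alpha$, $\alpha:O\vdash_{\mathcal F}t:S$ implies $\alpha\notin Fv(t)$. For $K$ a type variable or constant, ''$A$ ends with $K$'' is defined inductively: $K$ ends with $K$; if $A$ ends with $K$ then $B\rightarrow A$ ends with $K$ for every type $B$; if $A$ ends with $K$ then $\forall X A$ ends with $K$ for every type variable $X\neq K$. *)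

(* Defs.v *)
From Stdlib Require Import Arith List.
Import ListNotations.

Inductive term : Type :=
| Var : nat -> term
| Lam : nat -> term -> term
| App : term -> term -> term.

Fixpoint free_in (x : nat) (t : term) : Prop :=
  match t with
  | Var y => x = y
  | Lam y u => x <> y /\ free_in x u
  | App u v => free_in x u \/ free_in x v
  end.

Fixpoint normal (t : term) : Prop :=
  match t with
  | Var _ => True
  | Lam _ u => normal u
  | App u v =>
      match u with Lam _ _ => False | _ => True end /\ normal u /\ normal v
  end.

Inductive ty : Type :=
| TVar : nat -> ty
| TConst : nat -> ty
| Arrow : ty -> ty -> ty
| Forall : ty -> ty.

Definition O : ty := TConst 0.

Fixpoint occurs (n : nat) (A : ty) : Prop :=
  match A with
  | TVar m => n = m
  | TConst _ => False
  | Arrow B C => occurs n B \/ occurs n C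
  | Forall B => occurs (S n) B
  end.

Fixpoint proper (A : ty) : Prop :=
  match A with
  | TVar _ | TConst _ => True
  | Arrow B C => proper B /\ proper C
  | Forall B => occurs 0 B /\ proper B
  end.

Definition closed_ty (A : ty) : Prop := forall n, ~ occurs n A.

Fixpoint contains_const (k : nat) (A : ty) : Prop :=
  match A with
  | TVar _ => False
  | TConst k' => k = k'
  | Arrow B C => contains_const k B \/ contains_const k C
  | Forall B => contains_const k B
  end.

Definition contains_O (A : ty) : Prop := contains_const 0 A.

Fixpoint lift (c : nat) (A : ty) : ty :=
  match A with
  | TVar n => if n <? c then TVar n else TVar (S n)
  | TConst k => TConst k
  | Arrow B C => Arrow (lift c B) (lift c C)
  | Forall B => Forall (lift (S c) B)
  end.

(** subst k C A = A[C/k], removing variable k (indices above k decremented) *)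
Fixpoint subst (k : nat) (C : ty) (A : ty) : ty :=
  match A with
  | TVar n => if n <? k then TVar n else if n =? k then C else TVar (pred n)
  | TConst c => TConst c
  | Arrow B D => Arrow (subst k C B) (subst k C D)
  | Forall B => Forall (subst (S k) (lift 0 C) B)
  end.

Inductive ends_with_const (k : nat) : ty -> Prop :=
| EW_base : ends_with_const k (TConst k)
| EW_arrow : forall B A, ends_with_const k A -> ends_with_const k (Arrow B A)
| EW_forall : forall A, ends_with_const k A -> ends_with_const k (Forall A).

Definition ends_with_O (A : ty) : Prop := ends_with_const 0 A.

Definition ctx := list (nat * ty).

Fixpoint lookup (x : nat) (G : ctx) : option ty :=
  match G with
  | [] => None
  | (y, A) :: G' => if x =? y then Some A else lookup x G'
  end.

Definition lift_ctx (G : ctx) : ctx := map (fun p => (fst p, lift 0 (snd p))) G.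

(** Typing in system F (only proper types). The rule forall_i is in de Bruijn
    form: the condition "X not free in Gamma" is realised by lifting Gamma. *)
Inductive typ : ctx -> term -> ty -> Prop :=
| T_ax : forall G x A, lookup x G = Some A -> typ G (Var x) A
| T_abs : forall G x B t C,
    proper B -> typ ((x, B) :: G) t C -> typ G (Lam x t) (Arrow B C)
| T_app : forall G u v B C,
    typ G u (Arrow B C) -> typ G v B -> typ G (App u v) C
| T_gen : forall G t A,
    occurs 0 A -> typ (lift_ctx G) t A -> typ G t (Forall A)
| T_inst : forall G t A C,
    proper C -> typ G t (Forall A) -> typ G t (subst 0 C A).

Definition output_type (S : ty) : Prop :=
  closed_ty S /\ proper S /\ ~ contains_O S /\
  forall (t : term) (alpha : nat),
    normal t -> typ [(alpha, O)] t S -> ~ free_in alpha t.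

(* Main.v *)
Require Import Defs.
From Stdlib Require Import List Arith Lia Classical.
Import ListNotations.

Lemma lookup_lift_ctx x G :
  lookup x (lift_ctx G) = option_map (lift 0) (lookup x G).
Proof.
  induction G as [|[y A] G IH]; simpl; auto.
  destruct (x =? y); auto.
Qed.

Lemma ends_lift k A c : ends_with_const k A -> ends_with_const k (lift c A).
Proof.
  intros H; revert c; induction H; intros c; simpl; constructor; auto.
Qed.

Lemma ends_subst k A n C : ends_with_const k A -> ends_with_const k (subst n C A).
Proof.
  intros H; revert n C; induction H; intros n C; simpl; constructor; auto.
Qed.

Lemma occurs_lift A : forall n c, occurs n A -> n < c -> occurs n (lift c A).
Proof.
  induction A; simpl; intros n0 c H Hlt; auto.
  - subst. destruct (n <? c) eqn:E; simpl; auto. apply Nat.ltb_ge in E; lia.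
  - destruct H; [left|right]; auto.
  - apply IHA; auto; lia.
Qed.

Lemma proper_lift A : forall c, proper A -> proper (lift c A).
Proof.
  induction A; simpl; intros c H; auto.
  - destruct (n <? c); simpl; auto.
  - destruct H; split; auto.
  - destruct H; split; auto. apply occurs_lift; auto; lia.
Qed.

Lemma occurs_subst A : forall n k C, occurs n A -> n < k -> occurs n (subst k C A).
Proof.
  induction A; simpl; intros n0 k C H Hlt; auto.
  - subst. destruct (n <? k) eqn:E; simpl; auto. apply Nat.ltb_ge in E; lia.
  - destruct H; [left|right]; auto.
  - apply IHA; auto; lia.
Qed.

Lemma proper_subst A : forall k C, proper A -> proper C -> proper (subst k C A).
Proof.
  induction A; simpl; intros k C H HC; auto.
  - destruct (n <? k); simpl; auto. destruct (n =? k); simpl; auto.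
  - destruct H; split; auto.
  - destruct H; split.
    + apply occurs_subst; auto; lia.
    + apply IHA; auto. apply proper_lift; auto.
Qed.

Fixpoint mk (a : nat) (T : ty) : term :=
  match T with
  | Arrow _ C => Lam (S a) (mk a C)
  | Defs.Forall A => mk a A
  | _ => Var a
  end.

Lemma mk_ok a T : ends_with_O T -> forall G, proper T -> lookup a G = Some O ->
  typ G (mk a T) T /\ normal (mk a T) /\ free_in a (mk a T).
Proof.
  unfold ends_with_O. induction 1; intros G Hp Hl; simpl in *.
  - repeat split; auto. constructor. auto.
  - destruct Hp as [HB HA].
    assert (Hl' : lookup a ((S a, B) :: G) = Some O).
    { simpl. replace (a =? S a) with false by (symmetry; apply Nat.eqb_neq; lia). auto. }
    destruct (IHends_with_const _ HA Hl') as (H1 & H2 & H3).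
    repeat split; auto. constructor; auto.
  - destruct Hp as [Ho HA].
    assert (Hl' : lookup a (lift_ctx G) = Some O).
    { rewrite lookup_lift_ctx, Hl. reflexivity. }
    destruct (IHends_with_const _ HA Hl') as (H1 & H2 & H3).
    repeat split; auto. constructor; auto.
Qed.

Definition R (a : nat) (G G' : ctx) : Prop :=
  lookup a G' = Some O /\
  forall y, y <> a -> lookup y G' = lookup y G \/
    (lookup y G' = None /\ exists A, lookup y G = Some A /\ ends_with_O A /\ proper A).

Lemma R_lift a G G' : R a G G' -> R a (lift_ctx G) (lift_ctx G').
Proof.
  intros [H1 H2]. split.
  - rewrite lookup_lift_ctx, H1. reflexivity.
  - intros y Hy. rewrite !lookup_lift_ctx. destruct (H2 y Hy) as [E|[E [A [E2 [E3 E4]]]]].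
    + left. rewrite E; auto.
    + right. rewrite E, E2. split; auto. exists (lift 0 A). split; auto. split.
      * apply ends_lift; auto.
      * apply proper_lift; auto.
Qed.

Lemma R_cons a G G' x B : x <> a -> R a G G' -> R a ((x,B)::G) ((x,B)::G').
Proof.
  intros Hx [H1 H2]. split.
  - simpl. replace (a =? x) with false by (symmetry; apply Nat.eqb_neq; auto). auto.
  - intros y Hy. simpl. destruct (y =? x); auto.
Qed.

Fixpoint head (t : term) : option nat :=
  match t with
  | Var y => Some y
  | App u _ => head u
  | Lam _ _ => None
  end.

Definition hr (G' : ctx) (t : term) : Prop :=
  match head t with Some y => lookup y G' = None | None => False end.

Definition isLam (t : term) : Prop := match t with Lam _ _ => True | _ => False end.

Fixpoint notin (a : nat) (t : term) : Prop :=
  match t with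
  | Var y => y <> a
  | Lam x u => x <> a /\ notin a u
  | App u v => notin a u /\ notin a v
  end.

Lemma hr_case a G G' t T : R a G G' -> ends_with_O T -> proper T -> hr G' t ->
  exists t', typ G' t' T /\ normal t' /\ (isLam t' -> isLam t \/ hr G' t) /\
    (forall y, free_in y t -> lookup y G' = None -> free_in a t').
Proof.
  intros [H1 _] He Hp Hh. destruct (mk_ok a T He G' Hp H1) as (A1 & A2 & A3).
  exists (mk a T). repeat split; auto.
Qed.

Lemma main a : forall G t T, typ G t T -> forall G', R a G G' -> normal t -> notin a t ->
  (hr G' t -> ends_with_O T /\ proper T) /\
  exists t', typ G' t' T /\ normal t' /\ (isLam t' -> isLam t \/ hr G' t) /\
    (forall y, free_in y t -> lookup y G' = None -> free_in a t').
Proof.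
  induction 1; intros G' HR Hn Hni.
  -
    simpl in Hni. assert (P1 : hr G' (Var x) -> ends_with_O A /\ proper A).
    { unfold hr; simpl. intros Hh. destruct HR as [_ H2].
      destruct (H2 x Hni) as [E|[_ [A' [E1 [E2 E3]]]]].
      - rewrite Hh, H in E. discriminate.
      - rewrite H in E1. injection E1 as <-. auto. }
    split; auto.
    destruct (classic (hr G' (Var x))) as [Hh|Hh].
    + destruct (P1 Hh); eapply hr_case; eauto.
    + exists (Var x). unfold hr in Hh; simpl in Hh.
      destruct HR as [_ H2].
      destruct (H2 x Hni) as [E|[E _]]; [|contradiction].
      repeat split; simpl; auto.
      * constructor. rewrite E; auto.
      * intros y Hy Hl. simpl in Hy. subst. congruence.
  -
    simpl in Hn, Hni. destruct Hni as [Hx Hni].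
    destruct (IHtyp ((x,B)::G') (R_cons _ _ _ _ _ Hx HR) Hn Hni) as [_ [t' (T1 & T2 & T3 & T4)]].
    split. { unfold hr; simpl. intros []. }
    exists (Lam x t'). split; [constructor; auto|]. split; [simpl; auto|].
    split; [simpl; auto|].
    + intros y [Hy Hf] Hl. split; [intro; subst; auto|].
      apply (T4 y Hf). simpl. replace (y =? x) with false by (symmetry; apply Nat.eqb_neq; auto). auto.
  -
    simpl in Hn, Hni. destruct Hn as (Hu & Hnu & Hnv). destruct Hni as [Hiu Hiv].
    destruct (IHtyp1 G' HR Hnu Hiu) as [P1u [u' (U1 & U2 & U3 & U4)]].
    destruct (IHtyp2 G' HR Hnv Hiv) as [_ [v' (V1 & V2 & V3 & V4)]].
    assert (P1 : hr G' (App u v) -> ends_with_O C /\ proper C).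
    { unfold hr; simpl. intros Hh. destruct (P1u Hh) as [E P].
      inversion E; subst. destruct P; auto. }
    split; auto.
    destruct (classic (hr G' (App u v))) as [Hh|Hh].
    + destruct (P1 Hh); eapply hr_case; eauto.
    + exists (App u' v'). split; [econstructor; eauto|].
      split; [|split; [simpl; intros []|]].
      * simpl. split; [|auto]. destruct u'; auto. destruct (U3 I) as [L|L].
        -- destruct u; simpl in *; auto.
        -- apply Hh. unfold hr in *; simpl; auto.
      * intros y [Hy|Hy] Hl; [left|right]; eauto.
  -
    destruct (IHtyp (lift_ctx G') (R_lift _ _ _ HR) Hn Hni) as [P1 [t' (T1 & T2 & T3 & T4)]].
    assert (Hhr : hr G' t <-> hr (lift_ctx G') t).
    { unfold hr. destruct (head t); [|tauto]. rewrite lookup_lift_ctx.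
      destruct (lookup n G'); simpl; split; intro; congruence. }
    assert (Q1 : hr G' t -> ends_with_O (Defs.Forall A) /\ proper (Defs.Forall A)).
    { intros Hh. destruct (P1 (proj1 Hhr Hh)). split; [constructor; auto|simpl; auto]. }
    split; auto.
    destruct (classic (hr G' t)) as [Hh|Hh].
    + destruct (Q1 Hh); eapply hr_case; eauto.
    + exists t'. repeat split; auto.
      * constructor; auto.
      * intros Hl. destruct (T3 Hl); auto. right; apply Hhr; auto.
      * intros y Hy Hl. apply (T4 y Hy). rewrite lookup_lift_ctx, Hl. auto.
  -
    destruct (IHtyp G' HR Hn Hni) as [P1 [t' (T1 & T2 & T3 & T4)]].
    assert (Q1 : hr G' t -> ends_with_O (subst 0 C A) /\ proper (subst 0 C A)).
    { intros Hh. destruct (P1 Hh) as [E P]. inversion E; subst. simpl in P.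
      split. apply ends_subst; auto. apply proper_subst; tauto. }
    split; auto.
    destruct (classic (hr G' t)) as [Hh|Hh].
    + destruct (Q1 Hh); eapply hr_case; eauto.
    + exists t'. repeat split; auto. econstructor; eauto.
Qed.

Fixpoint vars (t : term) : list nat :=
  match t with
  | Var y => [y]
  | Lam x u => x :: vars u
  | App u v => vars u ++ vars v
  end.

Lemma notin_vars a t : (forall y, In y (vars t) -> y < a) -> notin a t.
Proof.
  induction t; simpl; intros H.
  - specialize (H n (or_introl eq_refl)). lia.
  - split; [specialize (H n (or_introl eq_refl)); lia|]. apply IHt; auto.
  - split; [apply IHt1|apply IHt2]; intros; apply H; apply in_or_app; auto.
Qed.

Lemma lookup_combine_in y xs As A : lookup y (combine xs As) = Some A -> In A As.
Proof.
  revert As; induction xs; intros [|B As]; simpl; try discriminate.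
  destruct (y =? a); auto. intros E; injection E as <-; auto.
Qed.

Lemma in_le_max x l : In x l -> x <= list_max l.
Proof.
  intros H. assert (Hf := proj1 (list_max_le l (list_max l)) (le_n _)).
  rewrite Forall_forall in Hf. auto.
Qed.

Theorem theorem2p1p1 (S : ty) :
  closed_ty S -> proper S -> ~ contains_O S ->
  (output_type S <->
   forall (t : term) (xs : list nat) (As : list ty),
     NoDup xs -> length xs = length As ->
     (forall A, In A As -> proper A /\ ends_with_O A) ->
     normal t ->
     typ (combine xs As) t S ->
     forall x, In x xs -> ~ free_in x t).
Proof.
  intros Hc Hp HO. split.
  - intros [_ [_ [_ Hout]]] t xs As _ _ HAs Hn Ht x Hx Hf.
    set (a := Datatypes.S (list_max (vars t ++ xs))).
    assert (Hfresh : forall y, In y (vars t ++ xs) -> y < a).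
    { intros y Hy. apply in_le_max in Hy. unfold a. lia. }
    assert (HR : R a (combine xs As) [(a, O)]).
    { split. simpl. rewrite Nat.eqb_refl; auto.
      intros y Hy. simpl. replace (y =? a) with false by (symmetry; apply Nat.eqb_neq; auto).
      destruct (lookup y (combine xs As)) eqn:E; [right|left; auto].
      split; auto. exists t0. split; auto. apply lookup_combine_in in E.
      destruct (HAs _ E); auto. }
    assert (Hni : notin a t).
    { apply notin_vars. intros; apply Hfresh, in_or_app; auto. }
    destruct (main a _ _ _ Ht _ HR Hn Hni) as [_ [t' (T1 & T2 & _ & T4)]].
    apply (Hout t' a T2 T1). apply (T4 x Hf). simpl.
    assert (x < a) by (apply Hfresh, in_or_app; auto).
    replace (x =? a) with false by (symmetry; apply Nat.eqb_neq; lia). auto.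
  - intros H. repeat split; auto. intros t alpha Hn Ht.
    apply (H t [alpha] [O]); simpl; auto.
    + constructor; auto. constructor.
    + intros A [<-|[]]. split; simpl; auto. constructor.
Qed.
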